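(* Let $p,r,\ell\in\mathbb{N}$ with $1<p\leq r+1\leq\ell$, and let $x_1,\dots,x_\ell$ be arbitrary complex numbers. Then \[ \mathfrak{F}\big(\{x_j\}_{j=1}^{r}\big)\,\mathfrak{F}\big(\{x_j\}_{j=p}^{\ell}\big)-\mathfrak{F}\big(\{x_j\}_{j=1}^{\ell}\big)\,\mathfrak{F}\big(\{x_j\}_{j=p}^{r}\big) =\Big(\prod_{j=p-1}^{r}x_jx_{j+1}\Big)\,\mathfrak{F}\big(\{x_j\}_{j=1}^{p-2}\big)\,\mathfrak{F}\big(\{x_j\}_{j=r+2}^{\ell}\big). \] Moreover, if $p,r\in\mathbb{N}$ with $1<p\leq r+1$ and $\{x_j\}_{j=1}^\infty$ is a complex sequence with $\sum_{k=1}^\infty|x_kx_{k+1}|<\infty$, then \[ \mathfrak{F}\big(\{x_j\}_{j=1}^{r}\big)\,\mathfrak{F}\big(\{x_j\}_{j=p}^{\infty}\big)-\mathfrak{F}\big(\{x_j\}_{j=p}^{r}\big)\,\mathfrak{F}\big(\{x_j\}_{j=1}^{\infty}\big) =\Big(\prod_{j=p-1}^{r}x_jx_{j+1}\Big)\,\mathfrak{F}\big(\{x_j\}_{j=1}^{p-2}\big)\,\mathfrak{F}\big(\{x_j\}_{j=r+2}^{\infty}\big). \]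
   Context: For a complex sequence $x=\{x_k\}_{k=N_1}^{N_2}$ with $N_1,N_2\in\mathbb{Z}\cup\{\pm\infty\}$, $N_1\le N_2+1$ (the sequence is empty if $N_1=N_2+1$), satisfying $\sum_{k=N_1}^{N_2-1}|x_kx_{k+1}|<\infty$, define \[ \mathfrak{F}(x)=1+\sum_{m=1}^\infty(-1)^m\sum_{k\in\mathcal{I}(N_1,N_2,m)}x_{k_1}x_{k_1+1}x_{k_2}x_{k_2+1}\cdots x_{k_m}x_{k_m+1}, \] where $\mathcal{I}(N_1,N_2,m)=\{k\in\mathbb{Z}^m:\ k_{j+1}\ge k_j+2\ (1\le j\le m-1),\ N_1\le k_1,\ k_m<N_2\}$. In particular $\mathfrak{F}$ of the empty sequence equals $1$, and for a finite tuple $\mathfrak{F}(x_1,\dots,x_n)$ equals $\mathfrak{F}$ of the sequence $(x_1,\dots,x_n,0,0,\dots)$. Here $\{x_j\}_{j=a}^{b}$ with $b=a-1$ denotes the empty sequence. *)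

(* Defs.v *)
From HB Require Import structures.
From mathcomp Require Import all_boot all_order all_algebra.
From mathcomp Require Import complex.
From mathcomp Require Import all_classical all_reals all_analysis.

Set Implicit Arguments.
Unset Strict Implicit.
Unset Printing Implicit Defensive.

Import Order.TTheory GRing.Theory Num.Theory.
Import numFieldNormedType.Exports.

Local Open Scope classical_set_scope.
Local Open Scope ring_scope.

(* Index set I(N1,N2,m): m-tuples k with k_1 >= N1, k_{j+1} >= k_j + 2,
   and k_m < N2.  We encode a tuple as k : {ffun 'I_m -> 'I_N2}, so every
   entry is < N2 (for an increasing tuple this is k_m < N2). *)
Definition adm (N1 m N2 : nat) (k : {ffun 'I_m -> 'I_N2}) : bool :=
  [forall j : 'I_m, (N1 <= k j)%N] &&
  [forall i : 'I_m, forall j : 'I_m, (i.+1 == j :> nat) ==> (k i + 2 <= k j)%N].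

Section Frak.
Variable R : realType.
(* R[i] viewed through its numClosedFieldType structure, so that the
   MathComp-Analysis topology/limits of a numFieldType apply to it. *)
Local Notation C := (R[i] : numClosedFieldType).

Definition innerFin (x : nat -> C) (N1 N2 m : nat) : C :=
  \sum_(k : {ffun 'I_m -> 'I_N2} | adm N1 k)
     \prod_(j < m) (x (k j) * x (k j).+1).

Definition FrakFin (x : nat -> C) (N1 N2 : nat) : C :=
  1 + limn (fun n => \sum_(1 <= m < n) (-1) ^+ m * innerFin x N1 N2 m).

(* sum over the infinite index set I(N1,oo,m), taken as the limit over the
   exhausting finite sets I(N1,N,m), N -> oo *)
Definition innerInf (x : nat -> C) (N1 m : nat) : C :=
  limn (fun N => innerFin x N1 N m).

Definition FrakInf (x : nat -> C) (N1 : nat) : C :=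
  1 + limn (fun n => \sum_(1 <= m < n) (-1) ^+ m * innerInf x N1 m).

Definition adjAbsSummable (x : nat -> C) : Prop :=
  cvg ((fun n => \sum_(1 <= k < n) `|x k * x k.+1|) @ \oo).

End Frak.

(* Main.v *)
Require Import Defs.
From HB Require Import structures.
From mathcomp Require Import all_boot all_order all_algebra.
From mathcomp Require Import complex.
From mathcomp Require Import all_classical all_reals all_analysis.
From mathcomp Require Import zify ring lra.
Import Order.TTheory GRing.Theory Num.Theory.
Import numFieldNormedType.Exports.
Local Open Scope classical_set_scope.
Local Open Scope ring_scope.
Local Open Scope complex_scope.

Set Implicit Arguments.
Unset Strict Implicit.
Unset Printing Implicit Defensive.

Section Tan.
Variable R : realType.

Lemma cvg_fsum (K : nat) (w : nat -> nat -> R) (l : nat -> R) :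
  (forall k, (fun N => w N k) @ \oo --> l k) ->
  (fun N => \sum_(k < K) w N k) @ \oo --> \sum_(k < K) l k.
Proof.
move=> H; elim: K => [|K IH].
  rewrite big_ord0; under eq_fun do rewrite big_ord0; exact: cvg_cst.
rewrite big_ord_recr; under eq_fun do rewrite big_ord_recr.
exact: cvgD.
Qed.

Lemma tannery (u : nat -> nat -> R) (v M : R^nat) :
  (forall N k, `|u N k| <= M k) -> cvgn (series M) ->
  (forall k, (fun N => u N k) @ \oo --> v k) ->
  cvgn (series v) /\ (fun N => \sum_(k < N) u N k) @ \oo --> limn (series v).
Proof.
move=> hM cM cu.
have M0 k : 0 <= M k := le_trans (normr_ge0 _) (hM 0%N k).
have vM k : `|v k| <= M k.
  apply: (cvgr_to_le (cvg_norm (cu k))); exact: nearW.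
have cv : cvgn (series v).
  apply: normed_cvg; apply: (series_le_cvg _ _ vM cM) => //.
split => //.
apply/cvgrPdist_lt => e e0.
set V := limn (series v); set LM := limn (series M).
have e3 : 0 < e / 3 by rewrite divr_gt0.
have H1 : \forall K \near \oo, `|V - series v K| < e / 3 by move/cvgrPdist_lt: cv; apply.
have H2 : \forall K \near \oo, `|LM - series M K| < e / 3 by move/cvgrPdist_lt: cM; apply.
have [K0 _ HK] := filterI H1 H2.
have [HK1 HK2] := HK K0 (leqnn _).
have H3 := cvg_fsum (K:=K0) cu.
move/cvgrPdist_lt: H3 => /(_ _ e3) H3.
have H4 : \forall N \near \oo, (K0 <= N)%N by exists K0.
apply: filterS2 H3 H4 => N h3 h4.
have sp : \sum_(k < N) u N k = \sum_(k < K0) u N k + \sum_(K0 <= k < N) u N k.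
  by rewrite -!(big_mkord xpredT) (big_cat_nat (leq0n K0) h4).
have tl : `|\sum_(K0 <= k < N) u N k| <= LM - series M K0.
  apply: (le_trans (ler_norm_sum _ _ _)).
  apply: (@le_trans _ _ (\sum_(K0 <= k < N) M k)); first by apply: ler_sum => k _.
  have -> : \sum_(K0 <= k < N) M k = series M N - series M K0.
    by rewrite /series /= (big_cat_nat (leq0n K0) h4) /=; ring.
  rewrite lerD2r; apply: nondecreasing_cvgn_le => //.
  exact: nondecreasing_series.
have sv : series v K0 = \sum_(k < K0) v k by rewrite /series /= big_mkord.
rewrite sp.
have -> : V - (\sum_(k < K0) u N k + \sum_(K0 <= k < N) u N k) =
  (V - series v K0) + (\sum_(k < K0) v k - \sum_(k < K0) u N k) - \sum_(K0 <= k < N) u N k.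
  by rewrite sv; ring.
apply: (le_lt_trans (ler_normB _ _)).
apply: (@lt_le_trans _ _ (e/3 + e/3 + e/3)); last by lra.
rewrite ltrD //.
  apply: (le_lt_trans (ler_normD _ _)); exact: ltrD.
apply: le_lt_trans tl _.
by move: HK2; rewrite ger0_norm // subr_ge0; apply: nondecreasing_cvgn_le => //; exact: nondecreasing_series.
Qed.



Lemma bern (b s : R) m : 0 <= b -> 0 <= s ->
  b ^+ m.+1 + m.+1%:R * s * b ^+ m <= (b + s) ^+ m.+1.
Proof.
move=> b0 s0; elim: m => [|m IH]; first by rewrite expr1 expr0 mulr1 mul1r.
rewrite [(b + s) ^+ m.+2]exprS.
have bs0 : 0 <= b + s by rewrite addr_ge0.
apply: le_trans (ler_wpM2l bs0 IH).
have B0 : 0 <= b ^+ m by rewrite exprn_ge0.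
have c0 : 0 <= m.+1%:R :> R by rewrite ler0n.
have -> : m.+2%:R = m.+1%:R + 1 :> R by rewrite -natr1.
rewrite !exprS.
set B := b ^+ m; set c := m.+1%:R.
have := mulr_ge0 (mulr_ge0 (mulr_ge0 s0 s0) B0) c0.
move=> h; rewrite -subr_ge0.
have -> : (b + s) * (b * B + c * s * B) - (b * (b * B) + (c + 1) * s * (b * B)) = s * s * B * c by ring.
exact: h.
Qed.

Lemma keyG (s : nat -> R) N m : (forall k, 0 <= s k) -> forall a,
  m.+1%:R * \sum_(a <= k < N) (s k * (\sum_(k.+1 <= j < N) s j) ^+ m)
    <= (\sum_(a <= k < N) s k) ^+ m.+1.
Proof.
move=> s0 a; move: {2}(N - a)%N (erefl (N - a)%N) => d; elim: d a => [|d IH] a hd.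
  by rewrite !big_geq ?mulr0 ?expr0n //; lia.
have aN : (a < N)%N by lia.
rewrite !(big_ltn aN).
have := IH a.+1 ltac:(lia).
have T0 : 0 <= \sum_(a.+1 <= j < N) s j by rewrite sumr_ge0.
have := bern m T0 (s0 a).
set T := \sum_(a.+1 <= j < N) s j; set G := \sum_(a.+1 <= k < N) _.
move=> h1 h2; rewrite mulrDr addrC (addrC (s a)).
lra.
Qed.

Lemma sum_mono (s : nat -> R) N : (forall k, 0 <= s k) -> forall a b, (a <= b)%N ->
  \sum_(b <= k < N) s k <= \sum_(a <= k < N) s k.
Proof.
move=> s0 a b ab; case: (leqP b N) => bN.
  by rewrite (big_cat_nat ab bN) /= lerDr sumr_ge0.
by rewrite (big_geq (ltnW bN)) sumr_ge0.
Qed.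

Local Notation C := (R[i] : numClosedFieldType).
Local Notation Rc := (@complex.Re R).
Local Notation Ic := (@complex.Im R).
Lemma ReD (a b : R[i]) : Rc (a + b) = Rc a + Rc b. Proof. by case: a => ? ?; case: b => ? ? /=. Qed.
Lemma ImD (a b : R[i]) : Ic (a + b) = Ic a + Ic b. Proof. by case: a => ? ?; case: b => ? ? /=. Qed.
Lemma ReB (a b : R[i]) : Rc (a - b) = Rc a - Rc b. Proof. by case: a => ? ?; case: b => ? ? /=. Qed.
Lemma ImB (a b : R[i]) : Ic (a - b) = Ic a - Ic b. Proof. by case: a => ? ?; case: b => ? ? /=. Qed.
Lemma Re_sum n (F : nat -> R[i]) : Rc (\sum_(k < n) F k) = \sum_(k < n) Rc (F k).
Proof. by elim: n => [|n IH]; rewrite ?big_ord0 // !big_ord_recr ReD IH. Qed.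
Lemma Im_sum n (F : nat -> R[i]) : Ic (\sum_(k < n) F k) = \sum_(k < n) Ic (F k).
Proof. by elim: n => [|n IH]; rewrite ?big_ord0 // !big_ord_recr ImD IH. Qed.

Lemma Re_le (z : R[i]) : `|Rc z| <= Num.sqrt (Rc z ^+ 2 + Ic z ^+ 2).
Proof. by rewrite -sqrtr_sqr ler_wsqrtr // lerDl sqr_ge0. Qed.
Lemma Im_le (z : R[i]) : `|Ic z| <= Num.sqrt (Rc z ^+ 2 + Ic z ^+ 2).
Proof. by rewrite -sqrtr_sqr ler_wsqrtr // lerDr sqr_ge0. Qed.

Lemma posC (e : R[i]) : 0 < e -> e = (Rc e)%:C /\ 0 < Rc e.
Proof.
rewrite ltcE => /andP [/eqP ie re]; split => //.
by case: e ie {re} => a b /= ->.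
Qed.

Lemma cvgC_RI (f : nat -> C) (w : C) : f @ \oo --> w ->
  (fun n => Rc (f n)) @ \oo --> Rc w /\ (fun n => Ic (f n)) @ \oo --> Ic w.
Proof.
move/cvgrPdist_lt => H; split; apply/cvgrPdist_lt => e e0.
  have := H e%:C; rewrite ltcR => /(_ e0); apply: filterS => n.
  rewrite normc_def ltcR -ReB; exact: le_lt_trans (Re_le _).
have := H e%:C; rewrite ltcR => /(_ e0); apply: filterS => n.
rewrite normc_def ltcR -ImB; exact: le_lt_trans (Im_le _).
Qed.

Lemma cvgRI_C (f : nat -> C) (a b : R) :
  (fun n => Rc (f n)) @ \oo --> a -> (fun n => Ic (f n)) @ \oo --> b ->
  f @ \oo --> ((a +i* b : R[i]) : C).
Proof.
move=> /cvgrPdist_lt ha /cvgrPdist_lt hb; apply/cvgrPdist_lt => e /posC [-> E0].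
set E := Rc e.
have E2 : 0 < E / 2 by rewrite divr_gt0.
apply: filterS2 (ha _ E2) (hb _ E2) => n h1 h2.
rewrite normc_def ltcR.
have -> : E = Num.sqrt (E ^+ 2) by rewrite sqrtr_sqr gtr0_norm.
rewrite ltr_sqrt ?exprn_gt0 //.
move: h1 h2; rewrite ReB ImB /= !ltr_norml => /andP [h1 h1'] /andP [h2 h2'].
nra.
Qed.


Lemma tanneryC (u : nat -> nat -> C) (v : nat -> C) (M : R^nat) :
  (forall N k, `|u N k| <= (M k)%:C) -> cvgn (series M) ->
  (forall k, (fun N => u N k) @ \oo --> v k) ->
  cvgn (series v) /\ (fun N => \sum_(k < N) u N k) @ \oo --> limn (series v).
Proof.
move=> hM cM cu.
have [cr tr] := @tannery (fun N k => Rc (u N k)) (fun k => Rc (v k)) M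
  ltac:(move=> N k; apply: le_trans (Re_le _) _; move: (hM N k); rewrite normc_def lecR //)
  cM ltac:(move=> k; exact: (cvgC_RI (cu k)).1).
have [ci ti] := @tannery (fun N k => Ic (u N k)) (fun k => Ic (v k)) M
  ltac:(move=> N k; apply: le_trans (Im_le _) _; move: (hM N k); rewrite normc_def lecR //)
  cM ltac:(move=> k; exact: (cvgC_RI (cu k)).2).
have Hs : series v @ \oo --> ((limn (series (fun k => Rc (v k))) +i* limn (series (fun k => Ic (v k))) : R[i]) : C).
  apply: cvgRI_C.
    have -> : (fun n => Rc (series v n)) = series (fun k => Rc (v k)).
      by apply/funext => n; rewrite !seriesEord /= Re_sum.
    exact: cr.
  have -> : (fun n => Ic (series v n)) = series (fun k => Ic (v k)).
    by apply/funext => n; rewrite !seriesEord /= Im_sum.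
  exact: ci.
split; first by apply/cvg_ex; eexists; exact: Hs.
rewrite (cvg_lim _ Hs) //.
apply: cvgRI_C.
  by under eq_fun do rewrite Re_sum.
by under eq_fun do rewrite Im_sum.
Qed.

End Tan.

Section Comb.
Variable R : realType.
Variable x : nat -> R[i].

Fixpoint P (a N m : nat) : R[i] :=
  match m with 0 => 1 | m'.+1 => \sum_(a <= k < N) (x k * x k.+1) * P k.+2 N m' end.

Definition consec m N (g : {ffun 'I_m -> 'I_N}) :=
  [forall i : 'I_m, forall j : 'I_m, (i.+1 == j :> nat) ==> (g i + 2 <= g j)%N].

Lemma consec_mono m N (g : {ffun 'I_m -> 'I_N}) : consec g ->
  forall i j : 'I_m, (i <= j)%N -> (g i <= g j)%N.
Proof.
move=> /forallP H i j; move: {2}(j - i)%N (erefl (j - i)%N) => d.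
elim: d j => [|d IH] j hd hij.
  have -> : j = i by apply/val_inj => /=; apply/eqP; rewrite eqn_leq hij -subn_eq0 hd.
  by [].
have hj1 : (j.-1 < m)%N by rewrite (leq_ltn_trans (leq_pred _)).
have hj0 : (0 < j)%N by case: (nat_of_ord j) hd => //=; rewrite sub0n.
pose j' := Ordinal hj1.
have := IH j'; rewrite /= => IH'.
have h1 : (j.-1 - i)%N = d by rewrite -subn1 subnAC subn1 hd.
have h2 : (i <= j.-1)%N by rewrite -ltnS prednK // ltn_neqAle hij andbT; apply/eqP=> e; move: hd; rewrite e subnn.
have := IH' h1 h2.
have /forallP/(_ j) := H j'; rewrite /= prednK // eqxx /= => h3 h4.
by apply: (leq_trans h4); apply: leq_trans h3; rewrite leq_addr.
Qed.

Lemma admE a m N (g : {ffun 'I_m -> 'I_N}) : adm a g = [forall j, (a <= g j)%N] && consec g.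
Proof. by []. Qed.

Definition fcons m N (i : 'I_N) (g : {ffun 'I_m -> 'I_N}) : {ffun 'I_m.+1 -> 'I_N} :=
  [ffun j => if unlift ord0 j is Some j' then g j' else i].

Lemma fcons0 m N i (g : {ffun 'I_m -> 'I_N}) : fcons i g ord0 = i.
Proof. by rewrite ffunE unlift_none. Qed.

Lemma fconsS m N i (g : {ffun 'I_m -> 'I_N}) j : fcons i g (lift ord0 j) = g j.
Proof. by rewrite ffunE liftK. Qed.

Lemma adm_cons a m N i (g : {ffun 'I_m -> 'I_N}) :
  adm a (fcons i g) = (a <= i)%N && adm i.+2 g.
Proof.
rewrite !admE.
apply/idP/idP.
- case/andP => /forallP H1 /forallP H2.
  have ai := H1 ord0; rewrite fcons0 in ai; rewrite ai /=.
  have cg : consec g.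
    apply/forallP => i1; apply/forallP => j1; apply/implyP => e.
    have /forallP/(_ (lift ord0 j1))/implyP := H2 (lift ord0 i1).
    by rewrite !fconsS /= /bump /= !add1n eqSS; apply.
  rewrite cg andbT; apply/forallP => j.
  have j0 : (0 < m)%N := leq_ltn_trans (leq0n j) (ltn_ord j).
  pose j0' := Ordinal j0.
  have /forallP/(_ (lift ord0 j0'))/implyP := H2 ord0.
  rewrite fcons0 fconsS /= /bump /= => /(_ isT) h.
  rewrite -addn2 (leq_trans h) //; apply: consec_mono => //.
- case/andP => ai /andP [/forallP H1 H2].
  apply/andP; split.
    apply/forallP => j; case: (unliftP ord0 j) => [j'|] -> ; rewrite ?fconsS ?fcons0 //.
    by apply: (leq_trans ai); apply: leq_trans (H1 j'); rewrite -addn2 leq_addr.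
  apply/forallP => i1; apply/forallP => j1; apply/implyP => e.
  case: (unliftP ord0 i1) e => [i'|] -> .
    case: (unliftP ord0 j1) => [j'|] -> /=; rewrite /bump /= ?add1n ?eqSS.
      by rewrite !fconsS => e; have /forallP/(_ j')/implyP := (forallP H2 i'); apply.
    by [].
  case: (unliftP ord0 j1) => [j'|] -> /=; rewrite /bump /= ?add1n ?eqSS.
    by rewrite fconsS fcons0 addn2 => _; apply: H1.
  by [].
Qed.

Lemma innerP a N m : innerFin x a N m = P a N m.
Proof.
elim: m a => [|m IH] a.
  rewrite /innerFin /=.
  rewrite (eq_bigr (fun _ => 1)); last by move=> i _; rewrite big_ord0.
  rewrite (eq_bigl xpredT); last first.
    by move=> k; rewrite /adm; apply/andP; split; apply/forallP => -[].
  rewrite sumr_const card_ffun !card_ord.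
  by [].
rewrite /innerFin /=.
have bij : bijective (fun p : 'I_N * {ffun 'I_m -> 'I_N} => fcons p.1 p.2).
  exists (fun f : {ffun 'I_m.+1 -> 'I_N} => (f ord0, [ffun j => f (lift ord0 j)])).
    by move=> [i g] /=; rewrite fcons0; congr pair; apply/ffunP => j; rewrite ffunE fconsS.
  move=> f /=; apply/ffunP => j; rewrite ffunE.
  by case: (unliftP ord0 j) => [j'|] -> ; rewrite ?liftK ?unlift_none ?ffunE.
rewrite (reindex _ (onW_bij _ bij)) /=.
rewrite (eq_bigl (fun p : 'I_N * {ffun 'I_m -> 'I_N} => (a <= p.1)%N && adm p.1.+2 p.2)); last first.
  by move=> [i g]; rewrite /= adm_cons.
rewrite (eq_bigr (fun p : 'I_N * {ffun 'I_m -> 'I_N} => (x p.1 * x p.1.+1) * \prod_(j < m) (x (p.2 j) * x (p.2 j).+1))); last first.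
  by move=> [i g] _; rewrite big_ord_recl /= fcons0; congr (_ * _); apply: eq_bigr => j _; rewrite fconsS.
rewrite -(pair_big_dep (fun i : 'I_N => (a <= i)%N) (fun i (g : {ffun 'I_m -> 'I_N}) => adm i.+2 g) (fun i (g : {ffun 'I_m -> 'I_N}) => (x i * x i.+1) * \prod_(j < m) (x (g j) * x (g j).+1))) /=.
rewrite big_geq_mkord /=.
apply: eq_bigr => i _.
by rewrite -IH /innerFin mulr_sumr.
Qed.


Lemma P_zero m a N : (N < a + m.+1)%N -> P a N m.+1 = 0.
Proof.
elim: m a => [|m IH] a h.
  by rewrite /= big_geq // -ltnS -(addn1 a).
have -> : P a N m.+2 = \sum_(a <= k < N) (x k * x k.+1) * P k.+2 N m.+1 by [].
rewrite big_nat_cond big1 // => k /andP [/andP [ak kN] _].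
by rewrite IH ?mulr0 //; lia.
Qed.

Lemma ffE a N B : (0 < B)%N -> (N < a + B)%N ->
  FrakFin x a N = \sum_(m < B) (-1)^+m * P a N m.
Proof.
move=> B0 hB; rewrite /FrakFin.
set L := limn _.
have -> : L = \sum_(1 <= m < B) (-1)^+m * P a N m.
  apply: lim_near_cst => //.
  exists B => // n /= hn.
  rewrite (big_cat_nat B0 hn) /= [X in _ + X]big_nat_cond [X in _ + X]big1 ?addr0.
    by apply: eq_bigr => m _; rewrite innerP.
  move=> m /andP [/andP [Bm _] _]; rewrite innerP.
  case: m Bm => [|m] Bm; first by move: Bm; rewrite leqn0 => /eqP Bz; rewrite Bz in B0.
  by rewrite P_zero ?mulr0 //; lia.
case: B B0 {hB} => // B _.
rewrite big_ord_recl big_add1 /= expr0 mul1r big_mkord.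
by congr (_ + _); apply: eq_bigr => i _; rewrite lift0.

Qed.

Lemma ff_one a N : (N <= a)%N -> FrakFin x a N = 1.
Proof.
move=> h; rewrite (@ffE a N 1) // ?big_ord1 ?expr0 ?mul1r //.
by rewrite addn1 ltnS.
Qed.

Lemma ff_rec a N : (a < N)%N ->
  FrakFin x a N = FrakFin x a.+1 N - x a * x a.+1 * FrakFin x a.+2 N.
Proof.
move=> aN.
rewrite (@ffE a N N.+2) // ?(@ffE a.+1 N N.+2) // ?(@ffE a.+2 N N.+1) //; last 3 first.
- lia.
- lia.
- lia.
have Hs i : P a N i.+1 = x a * x a.+1 * P a.+2 N i + P a.+1 N i.+1.
  by rewrite /= big_ltn.
have E1 b : \sum_(m < N.+2) (-1)^+m * P b N m = 1 + \sum_(i < N.+1) (-1)^+i.+1 * P b N i.+1.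
  by rewrite big_ord_recl expr0 mul1r; congr (_ + _); apply: eq_bigr => i _; rewrite lift0.
rewrite !E1.
rewrite (eq_bigr (fun i : 'I_N.+1 => (-1) ^+ i.+1 * P a.+1 N i.+1 - x a * x a.+1 * ((-1)^+i * P a.+2 N i))); last first.
  by move=> i _; rewrite Hs exprS; ring.
by rewrite big_split /= sumrN -mulr_sumr addrA.
Qed.


Local Notation f := (FrakFin x).

Lemma Eid q r l : (q <= r)%N -> (r < l)%N ->
  f q r * f q.+1 l - f q l * f q.+1 r = (\prod_(q <= j < r.+1) (x j * x j.+1)) * f r.+2 l.
Proof.
move=> qr rl; move: {2}(r - q)%N (erefl (r - q)%N) => d; elim: d q qr => [|d IH] q qr hd.
  have e : q = r by lia.
  subst q; rewrite big_nat1 (ff_one (a:=r) (N:=r)) // (ff_one (a:=r.+1) (N:=r)) //.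
  rewrite (ff_rec (a:=r) (N:=l)) //; ring.
have qr' : (q < r)%N by lia.
have := IH q.+1 qr' ltac:(lia).
rewrite (ff_rec (a:=q) (N:=r)) // (ff_rec (a:=q) (N:=l)) ?(ltn_trans qr') //.
move=> H; rewrite [in RHS]big_ltn ?ltnS //.
rewrite -[RHS]mulrA -H; ring.
Qed.

Lemma Fin a p r l : (a < p)%N -> (p <= r.+1)%N -> (r.+1 <= l)%N ->
  f a r * f p l - f a l * f p r =
  (\prod_(p.-1 <= j < r.+1) (x j * x j.+1)) * f a (p - 2) * f r.+2 l.
Proof.
move=> ap pr rl.
suff H : forall n a, (a < p)%N -> (p.-1 - a <= n)%N ->
  f a r * f p l - f a l * f p r =
  (\prod_(p.-1 <= j < r.+1) (x j * x j.+1)) * f a (p - 2) * f r.+2 l.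
  exact: (H (p.-1 - a)%N).
clear ap; elim=> [|n IH] {}a ap hn.
  have e : p = a.+1 by lia.
  subst p; rewrite /= Eid //.
  by rewrite (ff_one (a:=a) (N:=a.+1 - 2)) ?mulr1 //; lia.
have [hn'|hn'] := leqP (p.-1 - a)%N n; first exact: IH.
have [e|ne] := eqVneq a (p - 2)%N.
  have H1 := IH a.+1 ltac:(lia) ltac:(lia).
  have e2 : a.+2 = p by lia.
  rewrite (ff_rec (a:=a) (N:=r)) ?(ff_rec (a:=a) (N:=l)); try lia.
  rewrite e2 (ff_one (a:=a) (N:=p-2)); last by lia.
  rewrite (ff_one (a:=a.+1) (N:=p-2)) in H1; last by lia.
  rewrite mulr1 in H1; rewrite mulr1 -H1; ring.
have H1 := IH a.+1 ltac:(lia) ltac:(lia).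
have H2 := IH a.+2 ltac:(lia) ltac:(lia).
rewrite (ff_rec (a:=a) (N:=r)) ?(ff_rec (a:=a) (N:=l)) ?(ff_rec (a:=a) (N:=p-2)); try lia.
set c := x a * x a.+1.
set Pi := \prod_(p.-1 <= j < r.+1) (x j * x j.+1).
apply/eqP; rewrite -subr_eq0; apply/eqP.
transitivity ((f a.+1 r * f p l - f a.+1 l * f p r - Pi * f a.+1 (p-2) * f r.+2 l)
  - c * (f a.+2 r * f p l - f a.+2 l * f p r - Pi * f a.+2 (p-2) * f r.+2 l)); first ring.
by rewrite H1 H2 !subrr mulr0 subr0.
Qed.


Local Notation C := (R[i] : numClosedFieldType).
Local Notation Rc := (@complex.Re R).

Definition sR k : R := Rc `|x k * x k.+1|.

Lemma normE (z : R[i]) : `|z| = (Rc `|z|)%:C.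
Proof. by rewrite normc_def. Qed.

Lemma sR_ge0 k : 0 <= sR k.
Proof. by rewrite /sR normc_def /= sqrtr_ge0. Qed.

Definition T a N := \sum_(a <= k < N) sR k.

Lemma boundP m a N : `|P a N m| <= ((T a N) ^+ m / m`!%:R)%:C.
Proof.
elim: m a => [|m IH] a.
  by rewrite /= normr1 expr0 fact0 divr1.
have -> : P a N m.+1 = \sum_(a <= k < N) (x k * x k.+1) * P k.+2 N m by [].
apply: le_trans (ler_norm_sum _ _ _) _.
apply: (@le_trans _ _ (\sum_(a <= k < N) ((sR k * (T k.+2 N ^+ m / m`!%:R))%:C))).
  apply: ler_sum => k _; rewrite normrM [X in X * _]normE rmorphM.
  by apply: ler_wpM2l => //; rewrite lecR sR_ge0.
rewrite -rmorph_sum lecR.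
apply: (@le_trans _ _ (\sum_(a <= k < N) (sR k * (T k.+1 N ^+ m / m`!%:R)))).
  apply: ler_sum => k _; apply: ler_wpM2l; first exact: sR_ge0.
  apply: ler_wpM2r; first by rewrite invr_ge0 ler0n.
  apply: lerXn2r; rewrite ?nnegrE /T ?sumr_ge0 //; try by move=> *; exact: sR_ge0.
  by apply: sum_mono => //; exact: sR_ge0.
have key := @keyG R sR N m sR_ge0 a.
rewrite -/(T a N) in key.
under eq_bigr do rewrite mulrA.
rewrite -mulr_suml factS natrM invfM mulrA.
apply: ler_wpM2r; first by rewrite invr_ge0 ler0n.
by rewrite ler_pdivlMr ?ltr0n // mulrC.
Qed.


Lemma Rc_sumn m n (F : nat -> R[i]) : Rc (\sum_(m <= k < n) F k) = \sum_(m <= k < n) Rc (F k).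
Proof. exact: (big_morph Rc (@ReD R)). Qed.

Definition S := limn (fun n => \sum_(1 <= k < n) sR k).

Lemma cvgS : adjAbsSummable x -> cvgn (fun n => \sum_(1 <= k < n) sR k).
Proof.
move=> hx; have := (cvgC_RI hx).1.
under eq_fun do rewrite Rc_sumn.
by move=> h; apply/cvg_ex; eexists; exact: h.
Qed.

Lemma sum1_nd : nondecreasing_seq (fun n => \sum_(1 <= k < n) sR k).
Proof.
move=> n n' nn'; case: (leqP 1 n) => h.
  by rewrite /= (big_cat_nat h nn') /= lerDl sumr_ge0 // => k _; exact: sR_ge0.
by rewrite /= big_geq ?(ltnW h) ?sumr_ge0 // => k _; exact: sR_ge0.
Qed.

Lemma T_le_S a N : (1 <= a)%N -> adjAbsSummable x -> T a N <= S.
Proof.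
move=> a1 hx; apply: (@le_trans _ _ (T 1 N)).
  by apply: sum_mono => //; exact: sR_ge0.
exact: (nondecreasing_cvgn_le sum1_nd (cvgS hx)).
Qed.

Lemma T_ge0 a N : 0 <= T a N.
Proof. by apply: sumr_ge0 => k _; exact: sR_ge0. Qed.

Lemma S_ge0 : adjAbsSummable x -> 0 <= S.
Proof. by move=> hx; apply: le_trans (T_le_S 0 (leqnn 1) hx); exact: T_ge0. Qed.

Lemma boundPS m a N : (1 <= a)%N -> adjAbsSummable x ->
  `|P a N m| <= (S ^+ m / m`!%:R)%:C.
Proof.
move=> a1 hx; apply: le_trans (boundP m a N) _; rewrite lecR.
apply: ler_wpM2r; first by rewrite invr_ge0 ler0n.
by apply: lerXn2r; rewrite ?nnegrE ?T_ge0 ?S_ge0 ?T_le_S.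
Qed.


Lemma series_if1 (f : nat -> R) n :
  series (fun k => if (1 <= k)%N then f k else 0) n = \sum_(1 <= k < n) f k.
Proof.
rewrite /series /=; case: n => [|n]; first by rewrite !big_geq.
rewrite big_ltn // add0r; apply: eq_big_nat => k /andP [hk _]; by rewrite hk.
Qed.

Lemma Pdecomp a m N : P a N m.+1 =
  \sum_(k < N) (if (a <= k)%N then x k * x k.+1 * P k.+2 N m else 0).
Proof.
have -> : P a N m.+1 = \sum_(a <= k < N) (x k * x k.+1) * P k.+2 N m by [].
by rewrite big_geq_mkord big_mkcond.
Qed.

Lemma cvgPm (hx : adjAbsSummable x) m : forall a, (1 <= a)%N -> cvgn (fun N => (P a N m : C)).
Proof.
elim: m => [|m IH] a a1.
  by apply/cvg_ex; exists 1; exact: cvg_cst.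
set c := S ^+ m / m`!%:R.
have c0 : 0 <= c by rewrite divr_ge0 ?exprn_ge0 ?S_ge0 ?ler0n.
have := @tanneryC R (fun N k => (if (a <= k)%N then x k * x k.+1 * P k.+2 N m else 0 : C))
  (fun k => (if (a <= k)%N then x k * x k.+1 * limn (fun N => (P k.+2 N m : C)) else 0 : C))
  (fun k => if (1 <= k)%N then sR k * c else 0).
case.
- move=> N k; case: ifP => ak.
    rewrite (leq_trans a1 ak) normrM [X in X * _]normE rmorphM.
    by apply: ler_wpM2l; [rewrite lecR sR_ge0 | apply: boundPS].
  by rewrite normr0; case: ifP; rewrite // lecR mulr_ge0 ?sR_ge0.
- have -> : series (fun k => if (1 <= k)%N then sR k * c else 0) =
          (fun n => (\sum_(1 <= k < n) sR k) * c).
    apply/funext => n; rewrite series_if1 mulr_suml //.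
  apply/cvg_ex; eexists; apply: cvgM; [exact: cvgS | exact: cvg_cst].
- move=> k; case: ifP => ak; last exact: cvg_cst.
  apply: cvgM; first exact: cvg_cst.
  by apply: IH; rewrite ltnW.
move=> _ h; apply/cvg_ex; eexists.
under eq_fun do rewrite Pdecomp.
exact: h.
Qed.


Definition L a m : C := limn (fun N => (P a N m : C)).

Lemma innerInfE a m : innerInf x a m = L a m.
Proof.
rewrite /innerInf /L.
have -> : (fun N => innerFin x a N m) = (fun N => P a N m) by apply/funext => N; rewrite innerP.
by [].
Qed.

Lemma FrakInf_cvg (hx : adjAbsSummable x) a : (1 <= a)%N ->
  (fun N => (FrakFin x a N : C)) @ \oo --> FrakInf x a.
Proof.
move=> a1.
have := @tanneryC R (fun N m => ((-1) ^+ m * P a N m : C))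
  (fun m => ((-1) ^+ m * L a m : C)) (exp_coeff S).
case.
- move=> N m; rewrite normrM normrX normrN1 expr1n mul1r.
  exact: boundPS.
- exact: is_cvg_series_exp_coeff.
- by move=> m; apply: cvgM; [exact: cvg_cst | exact: cvgPm].
move=> cv tn.
set V := limn _ in tn.
have FV : (fun N => (FrakFin x a N : C)) @ \oo --> V.
  apply: cvg_trans tn; apply: near_eq_cvg.
  exists 1%N => // N /= hN.
  by rewrite (@ffE a N N) //; lia.
suff -> : FrakInf x a = V by [].
have L0 : L a 0 = 1 by rewrite /L lim_cst.
have W : (fun n => \sum_(1 <= m < n) (-1) ^+ m * innerInf x a m) @ \oo --> V - 1.
  have h1 : (fun n => series (fun m => ((-1) ^+ m * L a m : C)) n - 1) @ \oo --> V - 1.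
    exact: (cvgB cv (cvg_cst (1 : C))).
  apply: cvg_trans h1; apply: near_eq_cvg.
  exists 1%N => // n /= hn.
  rewrite /series /= (big_ltn hn) /= expr0 mul1r L0 addrC addKr.
  by apply: eq_bigr => m _; rewrite innerInfE.
rewrite /FrakInf (cvg_lim _ W) //; ring.
Qed.

End Comb.

Local Notation C := (_ [i] : numClosedFieldType).

Theorem mainTheorem1 (R : realType) :
  (forall (p r l : nat) (x : nat -> R[i]),
      (1 < p)%N -> (p <= r.+1)%N -> (r.+1 <= l)%N ->
      FrakFin x 1 r * FrakFin x p l - FrakFin x 1 l * FrakFin x p r =
      (\prod_(p.-1 <= j < r.+1) (x j * x j.+1))
        * FrakFin x 1 (p - 2) * FrakFin x r.+2 l)
  /\
  (forall (p r : nat) (x : nat -> R[i]),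
      (1 < p)%N -> (p <= r.+1)%N ->
      adjAbsSummable x ->
      FrakFin x 1 r * FrakInf x p - FrakFin x p r * FrakInf x 1 =
      (\prod_(p.-1 <= j < r.+1) (x j * x j.+1))
        * FrakFin x 1 (p - 2) * FrakInf x r.+2).
Proof.
split.
  by move=> p r l x p1 pr rl; apply: (@Fin R x 1 p r l) => //; lia.
move=> p r x p1 pr hx.
have hp := @FrakInf_cvg R x hx p ltac:(lia).
have h1 := @FrakInf_cvg R x hx 1 (leqnn 1).
have hr := @FrakInf_cvg R x hx r.+2 isT.
set A := FrakFin x 1 r; set Bc := FrakFin x p r.
set Pi := \prod_(p.-1 <= j < r.+1) (x j * x j.+1); set D := FrakFin x 1 (p - 2).
have c1 : (fun l => (A * FrakFin x p l - Bc * FrakFin x 1 l : C)) @ \oo -->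
    (A * FrakInf x p - Bc * FrakInf x 1 : C).
  exact: (cvgB (cvgM (cvg_cst A) hp) (cvgM (cvg_cst Bc) h1)).
have c2 : (fun l => (A * FrakFin x p l - Bc * FrakFin x 1 l : C)) @ \oo -->
    (Pi * D * FrakInf x r.+2 : C).
  apply: cvg_trans (cvgM (cvg_cst (Pi * D : C)) hr); apply: near_eq_cvg.
  exists r.+1 => // l /= hl.
  rewrite (mulrC Bc) /A /Bc (@Fin R x 1 p r l) //; lia.
by rewrite -(cvg_lim _ c1) // (cvg_lim _ c2).
Qed.
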